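(* Let $(N_0,c,w,P)$ be an RS-situation and $(N_0,v)$ the corresponding RS-game. Then $x\in Core(N_0,v)$ if and only if there exists $w^*=(w_i^* )_{i\in N}\in\mathbb{R}^n$ with $w_i^*\ge c$ for all $i\in N$ and $\sum_{i\in S}\Pi_i^{ret}(q_i^c;w_i^* )\ge v(S)$ for all nonempty $S\subseteq N$, such that \[x_0=\sum_{i\in N}\Pi_i^{sup}(q_i^c;w_i^* )\quad\text{and}\quad x_i=\Pi_i^{ret}(q_i^c;w_i^* )\ \text{ for } i\in N.\]
   Context: Let $c\in\mathbb{R}$. An RS-problem is a triple $(c,w,p)$ where $w:\mathbb{R}_+\to(c,+\infty)$ is decreasing (non-increasing) and continuous, and $p:\mathbb{R}_+\to\mathbb{R}$ is decreasing (non-increasing) and continuous, satisfies $p(0)>w(0)$, and there exists $q>0$ with $p(q)=c$. An RS-situation is a tuple $(N_0,c,w,P)$ where $N=\{1,\dots,n\}$ is the set of retailers, $0$ denotes the supplier, $N_0=N\cup\{0\}$, $P=(p_1,\dots,p_n)$, and $(c,w,p_i)$ is an RS-problem for each $i\in N$. For $S\subseteq N$ write $S_0=S\cup\{0\}$. For $q\ge0$ and $\omega\in\mathbb{R}$, $\Pi_i^{ret}(q;\omega)=(p_i(q)-\omega)q$ and $\Pi_i^{sup}(q;\omega)=(\omega-c)q$. For nonempty $S\subseteq N$, $(q_i^S)_{i\in S}$ is a fixed optimal solution of: maximize $\sum_{i\in S}(p_i(q_i)-w(q_S))q_i$ over $q\in\mathbb{R}_+^{S}$ subject to $p_i(q_i)\ge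 w(q_S)$ for all $i\in S$, where $q_S=\sum_{i\in S}q_i$; $q_S^S=\sum_{i\in S}q_i^S$. For $i\in N$, $q_i^c$ is a fixed optimal solution of: maximize $(p_i(q)-c)q$ over $q\ge0$ subject to $p_i(q)\ge c$. The corresponding RS-game $(N_0,v)$ is the TU game on $N_0$ with $v(\emptyset)=0$ and, for all $S\subseteq N$, $v(S)=\sum_{i\in S}\Pi_i^{ret}(q_i^S;w(q_S^S))$ and $v(S_0)=\sum_{i\in S}\Pi_i^{ret}(q_i^c;c)$. The core is $Core(N_0,v)=\{x\in\mathbb{R}^{N_0}: \sum_{i\in N_0}x_i=v(N_0),\ \sum_{i\in T}x_i\ge v(T)\text{ for all }T\subset N_0\}$. *)

(* Defs.v *)
From HB Require Import structures.
From mathcomp Require Import all_boot all_order all_algebra.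
From mathcomp Require Import all_classical all_reals topology normedtype.
Set Implicit Arguments. Unset Strict Implicit. Unset Printing Implicit Defensive.
Import Order.TTheory GRing.Theory Num.Theory numFieldNormedType.Exports.
Local Open Scope ring_scope.

Section RS.
Variable R : realType.

Definition nonincr_on_Rp (f : R -> R) : Prop :=
  forall x y : R, 0 <= x -> x <= y -> f y <= f x.

Local Open Scope classical_set_scope.
Definition RS_problem (c : R) (w p : R -> R) : Prop :=
  (forall x : R, 0 <= x -> c < w x) /\
  nonincr_on_Rp w /\
  {within `[0, +oo[%classic, continuous w} /\
  nonincr_on_Rp p /\
  {within `[0, +oo[%classic, continuous p} /\
  w 0 < p 0 /\
  (exists q : R, 0 < q /\ p q = c).

Local Close Scope classical_set_scope.

Definition RS_situation (n : nat) (c : R) (w : R -> R) (P : 'I_n -> R -> R) :=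
  forall i, RS_problem c w (P i).

Definition Pi_ret (p : R -> R) (q om : R) : R := (p q - om) * q.
Definition Pi_sup (c : R) (q om : R) : R := (om - c) * q.

Definition qsum (n : nat) (S : {set 'I_n}) (q : 'I_n -> R) : R :=
  \sum_(i in S) q i.

Definition S_objective (n : nat) (w : R -> R) (P : 'I_n -> R -> R)
  (S : {set 'I_n}) (q : 'I_n -> R) : R :=
  \sum_(i in S) (P i (q i) - w (qsum S q)) * q i.

Definition S_feasible (n : nat) (w : R -> R) (P : 'I_n -> R -> R)
  (S : {set 'I_n}) (q : 'I_n -> R) : Prop :=
  forall i, i \in S -> 0 <= q i /\ w (qsum S q) <= P i (q i).

(* (q_i^S)_{i in S} is an optimal solution of the coalition problem of S
   (only the values on S are relevant). *)
Definition S_optimal (n : nat) (w : R -> R) (P : 'I_n -> R -> R)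
  (S : {set 'I_n}) (q : 'I_n -> R) : Prop :=
  S_feasible w P S q /\
  forall q' : 'I_n -> R, S_feasible w P S q' ->
    S_objective w P S q' <= S_objective w P S q.

Definition c_optimal (c : R) (p : R -> R) (q : R) : Prop :=
  [/\ 0 <= q, c <= p q &
      forall q' : R, 0 <= q' -> c <= p q' -> Pi_ret p q' c <= Pi_ret p q c].

(* The RS-game on N_0 = option 'I_n (None = supplier 0). *)
Definition RS_game (n : nat) (c : R) (w : R -> R) (P : 'I_n -> R -> R)
  (qS : {set 'I_n} -> 'I_n -> R) (qc : 'I_n -> R)
  (T : {set option 'I_n}) : R :=
  let S := [set i : 'I_n | Some i \in T] in
  if None \in T then \sum_(i in S) Pi_ret (P i) (qc i) c
  else \sum_(i in S) Pi_ret (P i) (qS S i) (w (qsum S (qS S))).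

Definition core (n : nat) (v : {set option 'I_n} -> R) (x : option 'I_n -> R) : Prop :=
  \sum_(k in [set: option 'I_n]) x k = v [set: option 'I_n] /\
  forall T : {set option 'I_n}, T \proper [set: option 'I_n] ->
    v T <= \sum_(k in T) x k.

End RS.

(* Main.v *)
Require Import Defs.
From HB Require Import structures.
From mathcomp Require Import all_boot all_order all_algebra.
From mathcomp Require Import reals.
From mathcomp Require Import lra ring.
Import Order.TTheory GRing.Theory Num.Theory.
Local Open Scope ring_scope.

Lemma sum_opt (R : realType) (n : nat) (F : option 'I_n -> R) (T : {set option 'I_n}) :
  \sum_(k in T) F k = (if None \in T then F None else 0)
     + \sum_(i in [set i | Some i \in T]) F (Some i).
Proof.
rewrite (bigID (fun k => k == None)) /=; congr (_ + _).
  case: ifP => HN.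
    rewrite (big_pred1 None) // => k; rewrite !inE andbC; case: eqP => // ->.
    by rewrite HN.
  rewrite big_pred0 // => k; case: eqP => [->|]; rewrite ?HN ?andbF //.
rewrite -(big_imset _ (in2W (@Some_inj _))) /=.
apply: eq_bigl => k; case: k => [i|].
  by rewrite (mem_imset _ _ (@Some_inj _)) inE andbT.
rewrite andbF; apply/esym/negbTE/imsetP => -[j _] //.
Qed.

Lemma preSome (n : nat) (S : {set 'I_n}) : [set i | Some i \in Some @: S] = S.
Proof. by apply/setP => i; rewrite inE (mem_imset _ _ (@Some_inj _)). Qed.

Theorem theorem5p6 (R : realType) (n : nat) (c : R) (w : R -> R)
  (P : 'I_n -> R -> R)
  (qS : {set 'I_n} -> 'I_n -> R) (qc : 'I_n -> R)
  (Hsit : RS_situation c w P)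
  (HqS : forall S : {set 'I_n}, S != set0 -> S_optimal w P S (qS S))
  (Hqc : forall i : 'I_n, c_optimal c (P i) (qc i))
  (x : option 'I_n -> R) :
  core (RS_game c w P qS qc) x <->
  exists wst : 'I_n -> R,
    [/\ (forall i : 'I_n, c <= wst i),
        (forall S : {set 'I_n}, S != set0 ->
           RS_game c w P qS qc (Some @: S)
             <= \sum_(i in S) Pi_ret (P i) (qc i) (wst i)),
        x None = \sum_(i < n) Pi_sup c (qc i) (wst i)
      & forall i : 'I_n, x (Some i) = Pi_ret (P i) (qc i) (wst i)].
Proof.
have qc0 i : 0 <= qc i by case: (Hqc i).
have setTS : [set i : 'I_n | Some i \in [set: option 'I_n]] = [set: 'I_n].
  by apply/setP => i; rewrite !inE.
  have Nimg (S : {set 'I_n}) : (None \in Some @: S) = false.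
    by apply/negbTE/imsetP => -[].
  have sumimg (S : {set 'I_n}) : \sum_(k in Some @: S) x k = \sum_(i in S) x (Some i).
    by rewrite big_imset //; apply: in2W; exact: Some_inj.
  have propimg (S : {set 'I_n}) : Some @: S \proper [set: option 'I_n].
    by rewrite properT; apply/eqP => /setP /(_ None); rewrite Nimg in_setT.
split.
- move=> [Htot Hprop].
  rewrite /RS_game /= setTS in_setT sum_opt in_setT setTS in Htot.
  have Hub i : x (Some i) <= Pi_ret (P i) (qc i) c.
    have Hp : [set~ Some i] \proper [set: option 'I_n].
      by rewrite properT; apply/eqP => /setP /(_ (Some i)); rewrite !inE eqxx.
    have := Hprop _ Hp; rewrite /RS_game sum_opt !inE /=.
    have -> : [set j : 'I_n | Some j \in [set~ Some i]] = [set~ i].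
      by apply/setP => j; rewrite !inE; congr negb; apply/eqP/eqP => [[]|->].
    have D1 (F : 'I_n -> R) : \sum_(j in [set: 'I_n]) F j = F i + \sum_(j in [set~ i]) F j.
      rewrite (bigD1 i) ?inE //=; congr (_ + _); apply: eq_bigl => j; rewrite !inE.
      by [].
    move: Htot; rewrite !D1.
    move=> H1 H2; lra.
  have vge0 (S : {set 'I_n}) : S != set0 -> 0 <= RS_game c w P qS qc (Some @: S).
    move=> HS; rewrite /RS_game Nimg preSome.
    case: (HqS S HS) => _ Hopt.
    have := Hopt (fun _ => 0).
    have -> : S_objective w P S (fun _ => 0) = 0.
      by rewrite /S_objective big1 // => j _; rewrite mulr0.
    apply.
    move=> j _; split => //; rewrite /qsum big1 //.
    by case: (Hsit j) => [_ [_ [_ [_ [_ [Hp0 _]]]]]]; apply: ltW.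
  have Hlb i : 0 <= x (Some i).
    have := Hprop _ (propimg [set i]); rewrite sumimg big_set1.
    apply: le_trans; apply: vge0; apply/set0Pn; exists i; rewrite inE.
    done.
  pose wst i := if qc i == 0 then c else P i (qc i) - x (Some i) / qc i.
  have Hx i : x (Some i) = Pi_ret (P i) (qc i) (wst i).
    rewrite /wst /Pi_ret; case: eqP => [E|/eqP E].
      rewrite E mulr0; apply/le_anti; rewrite Hlb andbT.
      by have := Hub i; rewrite /Pi_ret E mulr0.
    by rewrite opprB addrC subrK mulfVK.
  exists wst; split => //.
  - move=> i; rewrite /wst; case: eqP => [//|/eqP E].
    have qp : 0 < qc i by rewrite lt_def E qc0.
    rewrite lerBrDr -lerBrDl ler_pdivrMr //; exact: Hub.
  - move=> S HS; have := Hprop _ (propimg S); rewrite sumimg.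
    by under eq_bigr => i _ do rewrite Hx.
  - have -> : \sum_(i < n) Pi_sup c (qc i) (wst i)
       = \sum_(i in [set: 'I_n]) (Pi_ret (P i) (qc i) c - x (Some i)).
      rewrite [RHS]big_mkcond /=; apply: eq_bigr => i _; rewrite inE Hx /Pi_ret /Pi_sup.
      by ring.
    rewrite sumrB -Htot; ring.
- move=> [wst [Hc Hv Hx0 Hx]].
  have supge0 i : 0 <= Pi_sup c (qc i) (wst i).
    by rewrite /Pi_sup mulr_ge0 ?subr_ge0.
  split.
    rewrite /RS_game in_setT setTS sum_opt in_setT setTS Hx0.
    under [X in _ + X = _]eq_bigr => i _ do rewrite Hx.
    have sT (F : 'I_n -> R) : \sum_(i in [set: 'I_n]) F i = \sum_(i < n) F i.
      by apply: eq_bigl => i; rewrite inE.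
    rewrite !sT -big_split /=.
    apply: eq_bigr => i _; rewrite /Pi_ret /Pi_sup; ring.
  move=> T HT.
  case HN: (None \in T).
    rewrite /RS_game HN sum_opt HN Hx0.
    set S := [set i | Some i \in T].
    under [X in _ <= _ + X]eq_bigr => i _ do rewrite Hx.
    rewrite [\sum_(i < n) _](bigID (fun i => i \in S)) /=.
    have E : \sum_(i < n | i \in S) Pi_sup c (qc i) (wst i)
        + \sum_(i in S) Pi_ret (P i) (qc i) (wst i) = \sum_(i in S) Pi_ret (P i) (qc i) c.
      rewrite -big_split /=; apply: eq_bigr => i _; rewrite /Pi_ret /Pi_sup; ring.
    have B : 0 <= \sum_(i < n | i \notin S) Pi_sup c (qc i) (wst i).
      by apply: sumr_ge0 => i _.
    lra.
  have ET : T = Some @: [set i | Some i \in T].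
    apply/setP => k; case: k => [i|]; first by rewrite (mem_imset _ _ (@Some_inj _)) inE.
    by rewrite Nimg HN.
  rewrite ET sumimg; set S := [set i | Some i \in T].
  under eq_bigr => i _ do rewrite Hx.
  have [->|HS] := eqVneq S set0.
    by rewrite /RS_game Nimg preSome !big_set0.
  exact: Hv.
Qed.
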